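(* Let $\rho$ be a fermionic state of $\mathsf{L}_\mathsf{F}$, $N\ge1$ and $\varepsilon>0$. The projector $P_{N,\varepsilon}(\rho)$ onto the $\varepsilon$-typical subspace of $\rho$ is (the Jordan–Wigner representative of) the Kraus operator of an admissible fermionic transformation on $\mathsf{L}_\mathsf{F}^{\boxtimes N}$.
   Context: A system $\mathsf{L}_\mathsf{F}$ of $L$ local fermionic modes is described by field operators $\varphi_1,\dots,\varphi_L$ with canonical anticommutation relations; the Jordan–Wigner isomorphism $J$ identifies the Fock basis $(\varphi_1^\dagger)^{n_1}\cdots(\varphi_L^\dagger)^{n_L}|\Omega\rangle$ with the computational basis of $L$ qubits, with $J(\varphi_i)=(\bigotimes_{l<i}\sigma^z_l)\otimes\sigma^-_i\otimes(\bigotimes_{k>i}I_k)$, extended linearly and multiplicatively. Fermionic states $\rho$ are linear combinations of products of an even number of field operators with $J(\rho)\geq0$ block-diagonal in the even/odd total-occupation subspaces; $\rho^{\boxtimes N}$ is the $N$-copy state, with $J(\rho^{\boxtimes N})=J(\rho)^{\otimes N}$. Admissible fermionic transformations are completely positive maps whose Kraus operators each are linear combinations of products of field operators with either all an even or all an odd number of factors. Typical subspace: let $J(\rho)=\sum_i p_i|x_i\rangle\langle x_i|$ be an orthonormal eigendecomposition, $X$ the random variable with values $x_i$ and probabilities $p_i$, and $S_f(\rho)=-\sum_ip_i\log_2p_i$. For a sequence $\mathbf{i}=(i_1,\dots,i_N)$ let $|x_{\mathbf{i}}\rangle=|x_{i_1}\rangle\otimes\cdots\otimes|x_{i_N}\rangle$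 and $p_{\mathbf{i}}=\prod_jp_{i_j}$; the sequence is $\varepsilon$-typical if $|\frac1N\log_2\frac{1}{p_{\mathbf{i}}}-S_f(\rho)|\leq\varepsilon$. Then $P_{N,\varepsilon}(\rho):=\sum_{\mathbf{i}\ \varepsilon\text{-typical}}|x_{\mathbf{i}}\rangle\langle x_{\mathbf{i}}|$. *)

(* Defs.v *)
From HB Require Import structures.
From mathcomp Require Import all_boot all_order all_algebra.
From mathcomp Require Import reals exp.
From mathcomp Require Import complex.
Set Implicit Arguments. Unset Strict Implicit. Unset Printing Implicit Defensive.
Import Order.TTheory GRing.Theory Num.Theory.
Local Open Scope ring_scope.
Local Open Scope complex_scope.

(* A system of M fermionic modes is represented (via Jordan-Wigner J) on    *)
(* the Fock / computational basis indexed by occupation configurations      *)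
(* x : 'I_M -> bool.  Operators are matrices indexed by 'I_(fock_dim M), where   *)
(* index a corresponds to the configuration enum_val a.                     *)

Definition Config (M : nat) := {ffun 'I_M -> bool}.
Definition fock_dim (M : nat) := #|Config M|.
Definition cfg (M : nat) (a : 'I_(fock_dim M)) : Config M := enum_val a.
Definition idx (M : nat) (x : Config M) : 'I_(fock_dim M) := enum_rank x.

Definition cparity (M : nat) (x : Config M) : bool := odd (\sum_(l < M) x l).

Section Fermions.
Variable R : realType.
Local Notation C := R[i].

Definition Op (M : nat) := 'M[C]_(fock_dim M).
Definition FVec (M : nat) := 'cV[C]_(fock_dim M).

Definition adj (m n : nat) (A : 'M[C]_(m, n)) : 'M[C]_(n, m) :=
  \matrix_(i, j) conjc (A j i).

(* J(phi_i) = (prod_{l<i} sigma^z_l) sigma^-_i : it maps |x> with x_i = 1 to *)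
(* (-1)^(sum_{l<i} x_l) |x with x_i := 0>, and |x> with x_i = 0 to 0.       *)
Definition jw_sign (M : nat) (x : Config M) (i : 'I_M) : C :=
  (-1) ^+ (\sum_(l < M | (l < i)%N) (x l : nat)).

Definition field_op (M : nat) (i : 'I_M) : Op M :=
  \matrix_(a, b)
    (let y := cfg a in let x := cfg b in
     if x i && (y == [ffun l => (l != i) && x l]) then jw_sign x i else 0).

Inductive fop (M : nat) := Ann of 'I_M | Cre of 'I_M.

Definition fop_mx (M : nat) (f : fop M) : Op M :=
  match f with Ann i => field_op i | Cre i => adj (field_op i) end.

Definition word_op (M : nat) (w : seq (fop M)) : Op M :=
  foldr (fun f A => fop_mx f *m A) 1%:M w.

Definition in_parity_span (M : nat) (p : bool) (K : Op M) : Prop :=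
  exists s : seq (C * seq (fop M)),
    all (fun cw => odd (size cw.2) == p) s /\
    K = \sum_(cw <- s) cw.1 *: word_op cw.2.

Definition parity_homogeneous (M : nat) (K : Op M) : Prop :=
  exists p : bool, in_parity_span p K.

Definition psd (M : nat) (A : Op M) : Prop :=
  forall v : FVec M, 0 <= (adj v *m A *m v) 0 0.

(* Admissible fermionic transformation given by Kraus operators ks:         *)
(* each Kraus operator is parity homogeneous; the map                       *)
(* rho |-> sum_k K rho K^dagger is completely positive, and we also require *)
(* it to be trace non-increasing (sum_k K^dagger K <= 1).                   *)
Definition admissible_kraus (M : nat) (ks : seq (Op M)) : Prop :=
  (forall K, K \in ks -> parity_homogeneous K) /\
  psd (1%:M - \sum_(K <- ks) adj K *m K).

Definition fermionic_state (M : nat) (rho : Op M) : Prop :=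
  [/\ in_parity_span false rho,
      psd rho,
      (forall a b, cparity (cfg a) != cparity (cfg b) -> rho a b = 0)
    & \tr rho = 1].

Definition eigendecomposition (M : nat) (rho : Op M)
    (x : 'I_(fock_dim M) -> FVec M) (p : 'I_(fock_dim M) -> R) : Prop :=
  (forall i j, adj (x i) *m x j = ((i == j)%:R : C)%:M) /\
  rho = \sum_i (p i)%:C *: (x i *m adj (x i)).

Definition log2 (y : R) : R := ln y / ln 2.

Definition xlog2x (y : R) : R := if y == 0 then 0 else y * log2 y.

Definition entropy (M : nat) (p : 'I_(fock_dim M) -> R) : R :=
  - \sum_i xlog2x (p i).

(* mode l of copy j (0-based) is mode j*L + l of the composite system, so   *)
(* that J(rho^{boxtimes N}) = J(rho)^{otimes N}.                            *)
Lemma modeIdx_subproof (N L : nat) (j : 'I_N) (l : 'I_L) : (j * L + l < N * L)%N.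
Proof.
have jN := ltn_ord j; have lL := ltn_ord l.
apply: (@leq_trans (j * L + L)); first by rewrite ltn_add2l.
by rewrite -mulSnr leq_mul2r ltn_ord orbT.
Qed.

Definition modeIdx (N L : nat) (j : 'I_N) (l : 'I_L) : 'I_(N * L) :=
  Ordinal (modeIdx_subproof j l).

Definition block (N L : nat) (j : 'I_N) (c : Config (N * L)) : Config L :=
  [ffun l => c (modeIdx j l)].

(* |x_ii> = |x_{i_1}> (x) ... (x) |x_{i_N}> *)
Definition tens_vec (N L : nat) (x : 'I_(fock_dim L) -> FVec L)
    (s : {ffun 'I_N -> 'I_(fock_dim L)}) : FVec (N * L) :=
  \col_a \prod_(j < N) x (s j) (idx (block j (cfg a))) 0.

Definition seq_prob (N L : nat) (p : 'I_(fock_dim L) -> R)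
    (s : {ffun 'I_N -> 'I_(fock_dim L)}) : R := \prod_(j < N) p (s j).

(* epsilon-typical sequences; sequences of probability 0 have             *)
(* (1/N) log2 (1/p) = +oo and are never typical.                          *)
Definition typical (N L : nat) (p : 'I_(fock_dim L) -> R) (eps : R)
    (s : {ffun 'I_N -> 'I_(fock_dim L)}) : bool :=
  (0 < seq_prob p s) &&
  (`| (N%:R)^-1 * log2 ((seq_prob p s)^-1) - entropy p | <= eps).

Definition typical_projector (N L : nat) (x : 'I_(fock_dim L) -> FVec L)
    (p : 'I_(fock_dim L) -> R) (eps : R) : Op (N * L) :=
  \sum_(s : {ffun 'I_N -> 'I_(fock_dim L)} | typical p eps s)
     tens_vec x s *m adj (tens_vec x s).

End Fermions.

(* Main.v *)
Require Import Defs.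
From HB Require Import structures.
From mathcomp Require Import all_boot all_order all_algebra.
From mathcomp Require Import reals exp.
From mathcomp Require Import complex.
From mathcomp Require Import zify ring.
Import Order.TTheory GRing.Theory Num.Theory.
Local Open Scope ring_scope.

Set Implicit Arguments. Unset Strict Implicit. Unset Printing Implicit Defensive.
Section S1.
Local Open Scope ring_scope.
Local Open Scope complex_scope.
Variable R : realType.
Local Notation C := R[i].
Lemma adjK m n (A : 'M[C]_(m,n)) : adj (adj A) = A.
Proof. by apply/matrixP=> i j; rewrite !mxE conjcK. Qed.
Lemma adj_mul m n k (A : 'M[C]_(m,n)) (B : 'M[C]_(n,k)) : adj (A *m B) = adj B *m adj A.
Proof. apply/matrixP=> i j; rewrite !mxE rmorph_sum; apply: eq_bigr => l _.
by rewrite !mxE rmorphM mulrC. Qed.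
Lemma adj_add m n (A B : 'M[C]_(m,n)) : adj (A + B) = adj A + adj B.
Proof. by apply/matrixP=> i j; rewrite !mxE rmorphD. Qed.
Lemma adj_scale m n c (A : 'M[C]_(m,n)) : adj (c *: A) = (conjc c) *: adj A.
Proof. by apply/matrixP=> i j; rewrite !mxE rmorphM. Qed.
Lemma adj_sum m n I (r : seq I) (P : pred I) (F : I -> 'M[C]_(m,n)) :
  adj (\sum_(i <- r | P i) F i) = \sum_(i <- r | P i) adj (F i).
Proof. elim/big_rec2: _ => [|i y1 y2 _ <-]; last by rewrite adj_add.
by apply/matrixP=> i j; rewrite !mxE conjc0. Qed.
Lemma adj1 n : adj (1%:M : 'M[C]_n) = 1%:M.
Proof. by apply/matrixP=> i j; rewrite !mxE conjc_nat eq_sym. Qed.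
Lemma adj_delta m n (a : 'I_m) (b : 'I_n) : adj (delta_mx a b : 'M[C]_(m,n)) = delta_mx b a.
Proof. by apply/matrixP=> i j; rewrite !mxE conjc_nat andbC. Qed.

Variable M : nat.
Implicit Types (K A B : Op R M) (w : seq (fop M)).

Lemma span0 p : in_parity_span p (0 : Op R M).
Proof. by exists [::]; rewrite big_nil. Qed.
Lemma spanD p A B : in_parity_span p A -> in_parity_span p B -> in_parity_span p (A + B).
Proof. move=> [s [hs ->]] [t [ht ->]]; exists (s ++ t); split.
  by rewrite all_cat hs ht. by rewrite big_cat. Qed.
Lemma spanZ p c A : in_parity_span p A -> in_parity_span p (c *: A).
Proof. move=> [s [hs ->]]; exists [seq (c * cw.1, cw.2) | cw <- s]; split.
  by rewrite all_map. rewrite big_map scaler_sumr; apply: eq_bigr => cw _.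
by rewrite scalerA. Qed.
Lemma spanS p I (r : seq I) (P : pred I) (F : I -> Op R M) :
  (forall i, P i -> in_parity_span p (F i)) -> in_parity_span p (\sum_(i <- r | P i) F i).
Proof. move=> h; elim/big_rec: _ => [|i y Pi hy]; first exact: span0.
exact: spanD (h _ Pi) hy. Qed.
Lemma spanL p I (r : seq I) (F : I -> Op R M) (Q : pred I) : all Q r ->
  (forall i, Q i -> in_parity_span p (F i)) -> in_parity_span p (\sum_(i <- r) F i).
Proof. move=> hr h; elim: r hr => [|i r IH] hr; first by rewrite big_nil; exact: span0.
by move: hr => /andP[qi qr]; rewrite big_cons; apply: spanD; [apply: h|apply: IH]. Qed.
Lemma word_cat w1 w2 : word_op R (w1 ++ w2) = word_op R w1 *m word_op R w2.
Proof. elim: w1 => [|f w1 IH] /=; first by rewrite mul1mx.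
by rewrite IH mulmxA. Qed.
Lemma span_word w : in_parity_span (odd (size w)) (word_op R w).
Proof. exists [:: (1, w)]; split; first by rewrite /= eqxx.
by rewrite big_seq1 scale1r. Qed.
Lemma span_wordM p w B : in_parity_span p B ->
  in_parity_span (odd (size w) (+) p) (word_op R w *m B).
Proof. move=> [s [hs ->]]; rewrite mulmx_sumr; apply: (spanL hs) => cw.
case: cw => c v /= /eqP hv.
rewrite -scalemxAr -word_cat; apply: spanZ; exists [:: (1, w ++ v)]; split.
  by rewrite /= size_cat oddD hv eqxx.
by rewrite big_seq1 scale1r. Qed.
Lemma spanM p q A B : in_parity_span p A -> in_parity_span q B ->
  in_parity_span (p (+) q) (A *m B).
Proof. move=> [s [hs ->]] hB; rewrite mulmx_suml; apply: (spanL hs) => cw.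
case: cw => c v /= /eqP hv.
by rewrite -scalemxAl; apply: spanZ; rewrite -hv; apply: span_wordM.
Qed.
Definition fflip (f : fop M) := match f with Ann i => Cre i | Cre i => Ann i end.
Lemma adj_word w : adj (word_op R w) = word_op R (rev (map fflip w)).
Proof. elim: w => [|f w IH] /=; first exact: adj1.
rewrite adj_mul IH rev_cons -cats1 word_cat /= mulmx1; congr (_ *m _).
by case: f => i //=; rewrite adjK. Qed.
Lemma span_adj p A : in_parity_span p A -> in_parity_span p (adj A).
Proof. move=> [s [hs ->]]; rewrite adj_sum; apply: (spanL hs) => cw.
case: cw => c v /= /eqP hv.
rewrite adj_scale adj_word; apply: spanZ; rewrite -hv -(size_map fflip v) -size_rev.
exact: span_word. Qed.

End S1.

Section S2.
Local Open Scope ring_scope.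
Local Open Scope complex_scope.
Variable R : realType.
Local Notation C := R[i].
Variable M : nat.
Implicit Types (a b c d : 'I_(fock_dim M)) (x y : Config M).

Lemma cfgK x : cfg (idx x) = x. Proof. exact: enum_rankK. Qed.
Lemma idxK a : idx (cfg a) = a. Proof. exact: enum_valK. Qed.
Lemma cfg_eq a y : (cfg a == y) = (a == idx y).
Proof. by apply/eqP/eqP => [<-|->]; rewrite ?idxK ?cfgK. Qed.

Definition clr (i : 'I_M) x : Config M := [ffun l => (l != i) && x l].
Definition setb (i : 'I_M) x : Config M := [ffun l => (l == i) || x l].

Lemma clr_set_iff x y i : (x i && (y == clr i x)) = (~~ y i && (x == setb i y)).
Proof. apply/andP/andP => [[xi /eqP ->]|[yi /eqP ->]]; split.
- by rewrite ffunE eqxx.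
- apply/eqP/ffunP => l; rewrite !ffunE; case: (eqVneq l i) => [->|] //=.
- by rewrite ffunE eqxx.
- apply/eqP/ffunP=> l; rewrite !ffunE; case: (eqVneq l i) => [->|] //=.
  by rewrite (negbTE yi).
Qed.

Lemma mul_delta_entry m n p (A : 'M[C]_(m,n)) (b : 'I_n) (c : 'I_p) (a : 'I_m) (d : 'I_p) :
  (A *m delta_mx b c) a d = A a b * (c == d)%:R.
Proof. rewrite mxE (bigD1 b) //= big1 => [|k kb]; rewrite !mxE.
  by rewrite eqxx addr0 eq_sym.
by rewrite (negbTE kb) mulr0. Qed.

Lemma sign_conj (k : nat) : conjc ((-1) ^+ k : C) = (-1) ^+ k.
Proof. by rewrite rmorphXn rmorphN1. Qed.
Lemma sign_sq (k : nat) : ((-1) ^+ k : C) * (-1) ^+ k = 1.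
Proof. by rewrite -exprMn mulrNN mulr1 expr1n. Qed.
Lemma sign_neq0 (k : nat) : ((-1) ^+ k : C) != 0.
Proof. by rewrite expf_neq0 // oppr_eq0 oner_eq0. Qed.

Lemma field_delta i b (c : 'I_(fock_dim M)) : field_op R i *m delta_mx b c =
  if cfg b i then jw_sign R (cfg b) i *: delta_mx (idx (clr i (cfg b))) c else 0.
Proof. apply/matrixP => a d; rewrite mul_delta_entry !mxE /= -/(clr i (cfg b)).
case: (cfg b i) => /=; last by rewrite mul0r mxE.
rewrite !mxE cfg_eq; case: (a == _) => /=; rewrite ?mul0r ?mulr0 //.
by rewrite eq_sym. Qed.

Lemma adj_field_delta i b (c : 'I_(fock_dim M)) : adj (field_op R i) *m delta_mx b c =
  if ~~ cfg b i then conjc (jw_sign R (setb i (cfg b)) i) *: delta_mx (idx (setb i (cfg b))) c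
  else 0.
Proof. apply/matrixP => a d; rewrite mul_delta_entry !mxE /= -/(clr i (cfg a)) clr_set_iff.
case: (cfg b i); rewrite [~~ _]/=; first by rewrite andFb rmorph0 mul0r mxE.
rewrite andTb !mxE cfg_eq; case: eqP => [->|] ; rewrite ?rmorph0 ?mul0r ?mulr0 //=.
by rewrite cfgK eq_sym. Qed.

Definition numw (i : 'I_M) : seq (fop M) := [:: Ann i; Cre i].
Lemma numw_delta i b (c : 'I_(fock_dim M)) :
  word_op R (numw i) *m delta_mx b c = (~~ cfg b i)%:R *: delta_mx b c.
Proof. rewrite /= mulmx1 -mulmxA adj_field_delta.
case: ifP => bi; last by rewrite mulmx0 scale0r.
rewrite -scalemxAr field_delta cfgK ffunE eqxx /= scalerA /jw_sign sign_conj.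
have -> : clr i (setb i (cfg b)) = cfg b.
  apply/ffunP => l; rewrite !ffunE; case: (eqVneq l i) => [->|] //=.
  by rewrite (negbTE bi).
by rewrite idxK sign_sq.
Qed.
End S2.

Section S3.
Local Open Scope ring_scope.
Local Open Scope complex_scope.
Variable R : realType.
Local Notation C := R[i].
Variable M : nat.
Implicit Types (a b c d : 'I_(fock_dim M)) (x y : Config M).

Definition vacw (r : seq 'I_M) : seq (fop M) := flatten [seq numw i | i <- r].
Lemma vacw_delta r b c : word_op R (vacw r) *m delta_mx b c =
  (all (fun l => ~~ cfg b l) r)%:R *: delta_mx b c.
Proof. elim: r => [|i r IH]; first by rewrite /= mul1mx scale1r.
rewrite (_ : vacw (i :: r) = numw i ++ vacw r) // word_cat -mulmxA IH -scalemxAr.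
rewrite numw_delta scalerA.
by rewrite -natrM mulnb andbC.
Qed.
Definition cfg0 : Config M := [ffun => false].
Definition o := idx cfg0.
Definition Q := word_op R (vacw (enum 'I_M)).
Lemma Q_delta : Q = delta_mx o o.
Proof. apply/matrixP => a d.
have -> : Q a d = (Q *m delta_mx d d) a d by rewrite mul_delta_entry eqxx mulr1.
rewrite /Q vacw_delta !mxE.
have -> : all (fun l => ~~ cfg d l) (enum 'I_M) = (d == o).
  rewrite -cfg_eq; apply/allP/eqP => [h|-> l _]; last by rewrite ffunE.
  by apply/ffunP => l; rewrite ffunE; apply/negbTE/h; rewrite mem_enum.
by rewrite eqxx andbT -natrM mulnb; case: (eqVneq d o) => [->|]; rewrite ?andbT ?andbF.
Qed.
Lemma Q_span : in_parity_span false Q.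
Proof. have := span_word R (vacw (enum 'I_M)); suff -> : odd (size (vacw (enum 'I_M))) = false by [].
elim: (enum 'I_M) => // i r IH.
by rewrite (_ : vacw (i :: r) = numw i ++ vacw r) // size_cat oddD IH. Qed.

Lemma cre_delta (r : seq 'I_M) (c : 'I_(fock_dim M)) : uniq r ->
  exists2 k : C, k != 0 &
  word_op R (map (@Cre M) r) *m delta_mx o c = k *: delta_mx (idx [ffun l => l \in r]) c.
Proof. elim: r => [|i r IH] /=.
  move=> _; exists 1; first exact: oner_neq0.
  rewrite mul1mx scale1r; congr (delta_mx (idx _) c); apply/ffunP => l; by rewrite !ffunE.
move=> /andP[ir /IH[k k0 h]]; rewrite -mulmxA h -scalemxAr adj_field_delta cfgK ffunE ir /=.
exists (k * conjc (jw_sign R (setb i [ffun l => l \in r]) i)).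
  by rewrite mulf_neq0 // /jw_sign sign_conj sign_neq0.
rewrite scalerA; congr (_ *: delta_mx (idx _) c); apply/ffunP => l; by rewrite !ffunE in_cons.
Qed.

Lemma cparity_size y : cparity y = odd (size (enum [pred l | y l])).
Proof. rewrite /cparity -cardE -sum1_card; congr odd.
rewrite [RHS]big_mkcond; apply: eq_bigr => l _; by rewrite inE; case: (y l). Qed.

Lemma delta_o_span a : in_parity_span (cparity (cfg a)) (delta_mx a o : Op R M).
Proof. set r := enum [pred l | cfg a l].
have [k k0 h] := cre_delta (o) (enum_uniq [pred l | cfg a l]).
move: h; have -> : [ffun l => l \in r] = cfg a by apply/ffunP => l; rewrite ffunE mem_enum.
 rewrite idxK -Q_delta => h.
have -> : delta_mx a o = k^-1 *: (word_op R (map (@Cre M) r) *m Q).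
  by rewrite h scalerA mulVf // scale1r.
apply: spanZ; rewrite -(addbF (cparity _)) cparity_size -(size_map (@Cre M)).
by apply: spanM; [apply: span_word|apply: Q_span]. Qed.

Lemma delta_span a b : in_parity_span (cparity (cfg a) (+) cparity (cfg b)) (delta_mx a b : Op R M).
Proof. rewrite -(mul_delta_mx o); apply: spanM; first exact: delta_o_span.
by rewrite -adj_delta; apply: span_adj; apply: delta_o_span. Qed.

Lemma span_even (K : Op R M) : (forall a b, cparity (cfg a) != cparity (cfg b) -> K a b = 0) ->
  in_parity_span false K.
Proof. move=> h; rewrite (matrix_sum_delta K); apply: spanS => a _; apply: spanS => b _.
case: (eqVneq (cparity (cfg a)) (cparity (cfg b))) => e.
  by apply: spanZ; rewrite -(addbb (cparity (cfg a))) {2}e; apply: delta_span.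
by rewrite h // scale0r; apply: span0. Qed.
End S3.

Section S4.
Local Open Scope ring_scope.
Local Open Scope complex_scope.
Variables N L : nat.

Lemma modeIdx_inj : injective (uncurry (@modeIdx N L)).
Proof. move=> [j l] [j' l'] /= /(congr1 val) /= e.
have ej : (j : nat) = j' by have := ltn_ord l; have := ltn_ord l'; nia.
have el : (l : nat) = l' by move: e; rewrite ej => /addnI.
by congr pair; apply: val_inj. Qed.

Lemma modeIdx_bij : bijective (uncurry (@modeIdx N L)).
Proof. apply: inj_card_bij; first exact: modeIdx_inj.
by rewrite card_prod !card_ord. Qed.

Lemma sum_modes (F : 'I_(N * L) -> nat) :
  (\sum_(m < N * L) F m = \sum_(j < N) \sum_(l < L) F (modeIdx j l))%N.
Proof. rewrite pair_bigA /= (reindex (uncurry (@modeIdx N L))) /=; last exact: onW_bij modeIdx_bij.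
by apply: eq_bigr => -[j l]. Qed.

Definition blocks (c : Config (N * L)) : {ffun 'I_N -> Config L} := [ffun j => block j c].

Lemma blocks_inj : injective blocks.
Proof. move=> c c' e; apply/ffunP => m.
have [g _ gK] := modeIdx_bij.
rewrite -(gK m); case: (g m) => j l /=.
by move/(congr1 (fun f : {ffun 'I_N -> Config L} => f j l)): e; rewrite !ffunE.
Qed.

Lemma blocks_bij : bijective blocks.
Proof. apply: inj_card_bij; first exact: blocks_inj.
have h1 := @card_ffun ('I_N) (Config L). have h2 := @card_ffun ('I_(N*L)) bool. rewrite /Config in h1 h2 *. rewrite h1 h2. rewrite (@card_ffun ('I_L) bool) !card_bool !card_ord. by rewrite -expnM mulnC. Qed.

Lemma cfg_bij M : bijective (@cfg M).
Proof. exact: (Bijective (@idxK M) (@cfgK M)). Qed.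

Lemma cparity_blocks (c : Config (N * L)) :
  cparity c = odd (\sum_(j < N) \sum_(l < L) (block j c l : nat)).
Proof. rewrite /cparity sum_modes; congr odd; apply: eq_bigr => j _; apply: eq_bigr => l _.
by rewrite ffunE. Qed.
End S4.

Section S5.
Local Open Scope ring_scope.
Local Open Scope complex_scope.
Variable R : realType.
Local Notation C := R[i].

Lemma adj_sub m n (A B : 'M[C]_(m,n)) : adj (A - B) = adj A - adj B.
Proof. by apply/matrixP=> i j; rewrite !mxE rmorphB. Qed.

Lemma psd_gram M (B : Op R M) : psd (adj B *m B).
Proof. move=> v; rewrite mulmxA -adj_mul -mulmxA mxE.
apply: sumr_ge0 => i _; rewrite !mxE. by rewrite mulrC; exact: mulcJ_ge0. Qed.

Lemma proj_psd M (I : finType) (P : pred I) (u : I -> FVec R M) :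
  (forall s t, adj (u s) *m u t = ((s == t)%:R)%:M) ->
  psd (1%:M - adj (\sum_(s | P s) u s *m adj (u s)) *m (\sum_(s | P s) u s *m adj (u s))).
Proof. move=> ortho; set Pm := \sum_(s | P s) _.
have hP : adj Pm = Pm.
  by rewrite /Pm adj_sum; apply: eq_bigr => s _; rewrite adj_mul adjK.
have hPP : Pm *m Pm = Pm.
  rewrite {1}/Pm mulmx_suml; apply: eq_bigr => s Ps.
  rewrite mulmx_sumr (bigD1 s) //= big1 => [|t /andP[_ ts]].
    by rewrite addr0 -mulmxA (mulmxA (adj (u s))) ortho eqxx mul1mx.
  by rewrite -mulmxA (mulmxA (adj (u s))) ortho eq_sym (negbTE ts) mul_scalar_mx scale0r mulmx0.
have -> : 1%:M - adj Pm *m Pm = adj (1%:M - Pm) *m (1%:M - Pm).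
  rewrite adj_sub adj1 hP mulmxBl !mulmxBr hPP !mul1mx mulmx1.
  by rewrite opprB addrA subrK.
exact: psd_gram. Qed.
End S5.

Section S6.
Local Open Scope ring_scope.
Local Open Scope complex_scope.
Variable R : realType.
Local Notation C := R[i].
Variables N L : nat.
Local Notation T := (fock_dim L).

Lemma sum_cfg M (G : Config M -> C) : \sum_(a < fock_dim M) G (cfg a) = \sum_(c : Config M) G c.
Proof. by rewrite (reindex (@cfg M)) //; apply: onW_bij; exact: cfg_bij. Qed.

Lemma sum_over_blocks (f : 'I_N -> Config L -> C) :
  \sum_(a < fock_dim (N * L)) \prod_(j < N) f j (block j (cfg a)) =
  \prod_(j < N) \sum_(b < T) f j (cfg b).
Proof.
rewrite (sum_cfg (fun c => \prod_(j < N) f j (block j c))).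
under [RHS]eq_bigr => j _ do rewrite (sum_cfg (f j)).
rewrite bigA_distr_bigA /= (reindex (@blocks N L)) /=; last by apply: onW_bij; exact: blocks_bij.
by apply: eq_bigr => c _; apply: eq_bigr => j _; rewrite ffunE.
Qed.

Lemma prod_eq_ffun (I J : finType) (s t : {ffun I -> J}) :
  \prod_(j : I) (((s j == t j) %:R) : C) = (s == t)%:R.
Proof. case: (eqVneq s t) => [->|st].
  by rewrite big1 // => j _; rewrite eqxx.
case: (pickP (fun j => s j != t j)) => [j hj|h].
  by rewrite (bigD1 j) //= (negbTE hj) mul0r.
by case/eqP: st; apply/ffunP => j; move/negbFE/eqP: (h j).
Qed.

Variable x : 'I_T -> FVec R L.
Hypothesis ortho : forall i j, adj (x i) *m x j = ((i == j)%:R)%:M.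

Lemma ortho_entry i j : \sum_b conjc (x i b 0) * x j b 0 = (i == j)%:R.
Proof. have := congr1 (fun A : 'M[C]_1 => A 0 0) (ortho i j) => /=.
by rewrite !mxE eqxx mulr1n => <-; apply: eq_bigr => b _; rewrite mxE. Qed.

Lemma tens_ortho (s t : {ffun 'I_N -> 'I_T}) :
  adj (tens_vec x s) *m tens_vec x t = ((s == t)%:R)%:M.
Proof. apply/matrixP => i0 j0; rewrite !ord1 !mxE eqxx mulr1n.
transitivity (\sum_(a < fock_dim (N * L)) \prod_(j < N)
   (conjc (x (s j) (idx (block j (cfg a))) 0) * x (t j) (idx (block j (cfg a))) 0)).
  by apply: eq_bigr => a _; rewrite !mxE rmorph_prod big_split.
rewrite (sum_over_blocks (fun j c => conjc (x (s j) (idx c) 0) * x (t j) (idx c) 0)).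
rewrite -prod_eq_ffun; apply: eq_bigr => j _; rewrite -ortho_entry.
by apply: eq_bigr => b _; rewrite idxK.
Qed.
End S6.

Section S7.
Local Open Scope ring_scope.
Local Open Scope complex_scope.
Variable R : realType.
Local Notation C := R[i].
Variables N L : nat.
Local Notation T := (fock_dim L).
Variable rho : Op R L.
Variable x : 'I_T -> FVec R L.
Variable p : 'I_T -> R.
Hypothesis hpar : forall a b, cparity (cfg a) != cparity (cfg b) -> rho a b = 0.
Hypothesis ortho : forall i j, adj (x i) *m x j = ((i == j)%:R)%:M.
Hypothesis hrho : rho = \sum_i (p i)%:C *: (x i *m adj (x i)).

Definition sg M (a : 'I_(fock_dim M)) : C := (-1) ^+ cparity (cfg a).
Definition U : 'M[C]_T := \matrix_(b, i) x i b 0.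
Definition Z : 'M[C]_T := \matrix_(a, b) ((a == b)%:R * sg a).
Definition D : 'M[C]_T := \matrix_(i, j) ((i == j)%:R * (p i)%:C).
Definition K := adj U *m Z *m U.

Lemma sg_conj M a : conjc (@sg M a) = sg a. Proof. exact: sign_conj. Qed.

Lemma diag_mul_l (d : 'I_T -> C) (A : 'M[C]_T) a b :
  ((\matrix_(i, j) ((i == j)%:R * d i)) *m A) a b = d a * A a b.
Proof. rewrite mxE (bigD1 a) //= big1 => [|k ka]; rewrite mxE.
  by rewrite eqxx mul1r addr0. by rewrite eq_sym (negbTE ka) !mul0r. Qed.
Lemma diag_mul_r (d : 'I_T -> C) (A : 'M[C]_T) a b :
  (A *m (\matrix_(i, j) ((i == j)%:R * d i))) a b = A a b * d b.
Proof. rewrite mxE (bigD1 b) //= big1 => [|k kb]; rewrite mxE.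
  by rewrite eqxx mul1r addr0. by rewrite (negbTE kb) !mul0r mulr0. Qed.

Lemma UU : adj U *m U = 1%:M.
Proof. apply/matrixP => i j; rewrite !mxE -(ortho_entry ortho).
by apply: eq_bigr => b _; rewrite !mxE. Qed.
Lemma UU' : U *m adj U = 1%:M. Proof. exact: mulmx1C UU. Qed.

Lemma rhoE : rho = U *m D *m adj U.
Proof. apply/matrixP => a b; rewrite hrho summxE mxE.
apply: eq_bigr => i _; rewrite diag_mul_r !mxE big_ord1 !mxE; ring. Qed.

Lemma Zrho : Z *m rho = rho *m Z.
Proof. apply/matrixP => a b; rewrite diag_mul_l diag_mul_r /sg.
case: (eqVneq (cparity (cfg a)) (cparity (cfg b))) => [->|ne]; first by rewrite mulrC.
by rewrite hpar // mulr0 mul0r. Qed.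

Lemma KD : K *m D = D *m K.
Proof.
have rU : rho *m U = U *m D by rewrite rhoE -!mulmxA UU mulmx1.
have Ur : adj U *m rho = D *m adj U by rewrite rhoE !mulmxA UU mul1mx.
rewrite /K -!mulmxA -rU (mulmxA Z) Zrho -(mulmxA rho) (mulmxA (adj U)) Ur.
by rewrite -!mulmxA.
Qed.

Lemma Kent i j : p i != p j -> K i j = 0.
Proof. move=> ne; have := congr1 (fun A : 'M[C]_T => A i j) KD => /=.
rewrite diag_mul_r diag_mul_l => /eqP; rewrite mulrC -subr_eq0 -mulrBl mulf_eq0.
case/orP => [|/eqP //]; rewrite subr_eq0 => /eqP /complexI e.
by rewrite e eqxx in ne. Qed.

Lemma adjZ : adj Z = Z.
Proof. apply/matrixP => a b; rewrite !mxE; case: (eqVneq a b) => [->|ne].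
  by rewrite ?eqxx ?mul1r sg_conj.
by rewrite (_ : false%:R = 0) // !mul0r rmorph0. Qed.
Lemma ZZ : Z *m Z = 1%:M.
Proof. apply/matrixP => a b; rewrite diag_mul_l !mxE mulrCA /sg sign_sq mulr1. done. Qed.

Lemma KK : K *m adj K = 1%:M.
Proof. rewrite /K !adj_mul adjK adjZ -!mulmxA (mulmxA U) UU' mul1mx.
by rewrite (mulmxA Z) ZZ mul1mx UU. Qed.

Lemma ZU_entry a s : sg a * U a s = \sum_t U a t * K t s.
Proof. have e : Z *m U = U *m K by rewrite /K !mulmxA UU' mul1mx.
have := congr1 (fun A : 'M[C]_T => A a s) e; rewrite /= {1}/Z diag_mul_l => ->.
by rewrite mxE. Qed.
End S7.

Section S8.
Local Open Scope ring_scope.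
Local Open Scope complex_scope.
Variable R : realType.
Local Notation C := R[i].
Variables N L : nat.
Local Notation T := (fock_dim L).
Variable rho : Op R L.
Variable x : 'I_T -> FVec R L.
Variable p : 'I_T -> R.
Variable eps : R.
Hypothesis hpar : forall a b, cparity (cfg a) != cparity (cfg b) -> rho a b = 0.
Hypothesis ortho : forall i j, adj (x i) *m x j = ((i == j)%:R)%:M.
Hypothesis hrho : rho = \sum_i (p i)%:C *: (x i *m adj (x i)).

Lemma conjcM (u v : C) : conjc (u * v) = conjc u * conjc v. Proof. exact: rmorphM. Qed.
Lemma conjc_sum (I : finType) (F : I -> C) : conjc (\sum_i F i) = \sum_i conjc (F i). Proof. exact: rmorph_sum. Qed.
Local Notation S := {ffun 'I_N -> 'I_T}.
Local Notation typ s := ((typical p eps s)%:R : C).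
Definition W (a : 'I_(fock_dim (N * L))) (s : S) : C :=
  \prod_(j < N) U x (idx (block j (cfg a))) (s j).
Definition KKt (t s : S) : C := \prod_(j < N) K x (t j) (s j).

Lemma sgN_prod (a : 'I_(fock_dim (N * L))) : sg R a = \prod_(j < N) sg R (idx (block j (cfg a))).
Proof. rewrite /sg cparity_blocks signr_odd expr_sum; apply: eq_bigr => j _.
by rewrite cfgK /cparity signr_odd. Qed.

Lemma stepA (a : 'I_(fock_dim (N * L))) (s : S) : sg R a * W a s = \sum_(t : S) W a t * KKt t s.
Proof. rewrite sgN_prod /W -big_split /=.
transitivity (\prod_(j < N) \sum_(u < T) U x (idx (block j (cfg a))) u * K x u (s j)).
  by apply: eq_bigr => j _; rewrite (ZU_entry ortho).
rewrite bigA_distr_bigA /=; apply: eq_bigr => t _; by rewrite big_split. Qed.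

Lemma stepB (t s : S) : typ s * KKt t s = typ t * KKt t s.
Proof. case: (eqVneq (KKt t s) 0) => [->|nz]; first by rewrite !mulr0.
have e : forall j, p (t j) = p (s j).
  move=> j; apply/eqP; apply: contraR nz => ne; apply/prodf_eq0; exists j => //.
  by rewrite (Kent hpar ortho hrho ne).
have : seq_prob p t = seq_prob p s by apply: eq_bigr => j _; rewrite e.
by rewrite /typical => ->. Qed.

Lemma stepC (t t' : S) : \sum_(s : S) KKt t s * conjc (KKt t' s) = (t == t')%:R.
Proof. rewrite -(prod_eq_ffun R t t').
transitivity (\sum_(s : S) \prod_(j < N) (K x (t j) (s j) * conjc (K x (t' j) (s j)))).
  by apply: eq_bigr => s _; rewrite /KKt rmorph_prod -big_split.
rewrite -(bigA_distr_bigA (fun j u => K x (t j) u * conjc (K x (t' j) u))) /=.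
apply: eq_bigr => j _; have := congr1 (fun A : 'M[C]_T => A (t j) (t' j)) (KK ortho).
by rewrite /= !mxE => <-; apply: eq_bigr => u _; rewrite !mxE. Qed.

Lemma Pentry (a b : 'I_(fock_dim (N * L))) : typical_projector N x p eps a b = \sum_(s : S) typ s * (W a s * conjc (W b s)).
Proof. rewrite /typical_projector summxE big_mkcond; apply: eq_bigr => s _.
rewrite !mxE big_ord1 !mxE /W.
have hU : forall c, \prod_(j < N) x (s j) (idx (block j (cfg c))) 0 = \prod_(j < N) U x (idx (block j (cfg c))) (s j).
  by move=> c; apply: eq_bigr => j _; rewrite mxE.
by rewrite !hU; case: (typical p eps s); rewrite ?mul1r ?mul0r. Qed.

Lemma P_sym (a b : 'I_(fock_dim (N * L))) : sg R a * sg R b * typical_projector N x p eps a b = typical_projector N x p eps a b.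
Proof. rewrite !Pentry mulr_sumr.
transitivity (\sum_(s : S) (\sum_(t : S) typ t * W a t * KKt t s) * conjc (\sum_(t' : S) W b t' * KKt t' s)).
  apply: eq_bigr => s _.
  have e : sg R a * sg R b * (typ s * (W a s * conjc (W b s))) =
     typ s * ((sg R a * W a s) * conjc (sg R b * W b s)).
    by rewrite conjcM sg_conj; ring.
  rewrite e stepA stepA mulrA mulr_sumr; congr (_ * _); apply: eq_bigr => t _.
  transitivity (W a t * (typ s * KKt t s)); first by ring.
  by rewrite stepB; ring.
under eq_bigr => s _ do rewrite conjc_sum big_distrlr /=.
rewrite exchange_big /=; apply: eq_bigr => t _; rewrite exchange_big /=.
transitivity (\sum_(t' : S) typ t * W a t * conjc (W b t') * (t == t')%:R).
  apply: eq_bigr => t' _; rewrite -stepC mulr_sumr; apply: eq_bigr => s _.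
  rewrite conjcM; ring.
rewrite (bigD1 t) //= big1; last first.
  by move=> t' ne; rewrite eq_sym (negbTE ne) mulr0.
by rewrite eqxx addr0 (_ : true%:R = 1) // mulr1 mulrA. Qed.

Lemma P_parity (a b : 'I_(fock_dim (N * L))) : cparity (cfg a) != cparity (cfg b) -> typical_projector N x p eps a b = 0.
Proof. move=> ne; have := P_sym a b.
have -> : sg R a * sg R b = -1.
  by rewrite /sg; move: ne; case: (cparity _); case: (cparity _); rewrite //= ?expr1 ?expr0 ?mulN1r ?mul1r ?mulr1.
rewrite mulN1r => h.
have : typical_projector N x p eps a b *+ 2 == 0 by rewrite mulr2n -{1}h addNr.
by rewrite mulrn_eq0 /= => /eqP. Qed.
End S8.


Unset Implicit Arguments. Set Strict Implicit. Set Printing Implicit Defensive.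

Theorem lemma1 (R : realType) (L N : nat) (rho : Op R L)
    (x : 'I_(fock_dim L) -> FVec R L) (p : 'I_(fock_dim L) -> R) (eps : R) :
  fermionic_state rho ->
  eigendecomposition rho x p ->
  (1 <= N)%N -> 0 < eps ->
  exists ks : seq (Op R (N * L)),
    admissible_kraus ks /\ typical_projector N x p eps \in ks.
Proof.
move=> [hspan hpsd hpar htr] [ortho hrho] _ _.
exists [:: typical_projector N x p eps]; split; last by rewrite mem_seq1.
split.
  move=> K; rewrite mem_seq1 => /eqP ->; exists false; apply: span_even => a b.
  exact: (P_parity eps hpar ortho hrho).
rewrite big_seq1; exact: (proj_psd _ (tens_ortho ortho)).
Qed.
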